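(* Let $(G,I,O)$ be a geometry with $|I|=|O|$. If $(G,I,O)$ has a causal path cover $\mathcal C$, then $\mathcal C$ is the unique maximum-size collection of pairwise vertex-disjoint directed paths in $G$ from $I$ to $O$ (i.e. any collection of pairwise vertex-disjoint directed paths, each starting in $I$ and ending in $O$, of maximum cardinality, equals $\mathcal C$).
   Context: Graphs are finite, simple, undirected, without self-loops; $v\sim w$ denotes adjacency. A geometry is $(G,I,O)$ with $I,O\subseteq V(G)$. A directed path in $G$ is a sequence of distinct vertices $u_0,\ldots,u_\ell$ ($\ell\ge0$, $\ell=0$ allowed) with consecutive vertices adjacent, oriented by arcs $u_i\to u_{i+1}$; an $I$–$O$ path starts in $I$ and ends in $O$. A path cover of $(G,I,O)$ is a collection of directed paths in $G$ such that every vertex lies on exactly one path, each path meets $I$ at most at its initial vertex, and each path meets $O$ exactly at its final vertex. For a family $\mathcal P$ of vertex-disjoint directed paths, an edge is covered by $\mathcal P$ if it underlies an arc of a path of $\mathcal P$. An influencing walk for $\mathcal P$ is a walk that is a concatenation of zero or more segments of the types (i) $v\to w$, an arc of a path of $\mathcal P$; (ii) $v\to z\to w$ with $v\to z$ an arc of a path of $\mathcal P$ and $zw\in E(G)$ not covered by $\mathcal P$. A vicious circuit for $\mathcal P$ is a closed influencing walk with at least one segment. A causal path cover is a path cover having no vicious circuits. *)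

(* Defs.v *)
(* A simple graph on a finite vertex type T is a symmetric,
   irreflexive boolean relation e. *)
From mathcomp Require Import all_boot.
Set Implicit Arguments. Unset Strict Implicit. Unset Printing Implicit Defensive.

Section Geometry.
Variables (T : finType) (e : rel T).

Definition dpath (p : seq T) : bool :=
  if p is x :: s then path e x s && uniq p else false.

Definition IO_path (I O : {set T}) (p : seq T) : bool :=
  if p is x :: s then [&& dpath p, x \in I & last x s \in O] else false.

Definition vdisjoint (P : seq (seq T)) : bool :=
  all dpath P && uniq (flatten P).

Definition disjoint_IO_paths (I O : {set T}) (P : seq (seq T)) : bool :=
  all (IO_path I O) P && uniq (flatten P).

Definition path_cover (I O : {set T}) (P : seq (seq T)) : Prop :=
  all dpath P /\
  (forall v : T, count (fun p => v \in p) P = 1) /\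
  (forall p, p \in P -> forall x s, p = x :: s ->
       (forall v, v \in s -> v \notin I) /\
       last x s \in O /\
       (forall v, v \in belast x s -> v \notin O)).

Definition arc (P : seq (seq T)) (v w : T) : bool :=
  has (fun p => (v, w) \in zip p (behead p)) P.

Definition covered (P : seq (seq T)) (u w : T) : bool :=
  arc P u w || arc P w u.

Definition inf_seg (P : seq (seq T)) (v w : T) : bool :=
  arc P v w || [exists z, [&& arc P v z, e z w & ~~ covered P z w]].

(* A vicious circuit: a closed influencing walk with at least one segment,
   given by its sequence of segment endpoints v = w_0, w_1, ..., w_k = v. *)
Definition has_vicious_circuit (P : seq (seq T)) : Prop :=
  exists (v : T) (s : seq T), s <> [::] /\ path (inf_seg P) v s /\ last v s = v.

Definition causal_path_cover (I O : {set T}) (P : seq (seq T)) : Prop :=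
  path_cover I O P /\ ~ has_vicious_circuit P.

End Geometry.

(* Main.v *)
Require Import Defs.
From mathcomp Require Import all_boot.
Require Import Defs.
Set Implicit Arguments. Unset Strict Implicit. Unset Printing Implicit Defensive.

Lemma zip_fst (T : eqType) (a : T) s u w :
  (u, w) \in zip (a :: s) s -> u \in belast a s.
Proof.
elim: s a => [|b s IH] a //=; rewrite inE => /orP[/eqP[-> _]|/IH H].
  by rewrite eqxx.
by rewrite H orbT.
Qed.

Lemma zip_snd (T : eqType) (a : T) s u w :
  (u, w) \in zip (a :: s) s -> w \in s.
Proof.
elim: s a => [|b s IH] a //=; rewrite inE => /orP[/eqP[_ ->]|/IH H].
  by rewrite eqxx.
by rewrite H orbT.
Qed.

Lemma zip_ex_fst (T : eqType) (a : T) s u :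
  u \in belast a s -> exists w, (u, w) \in zip (a :: s) s.
Proof.
elim: s a => [|b s IH] a //=; rewrite inE => /orP[/eqP->|/IH[w Hw]].
  by exists b; rewrite mem_head.
by exists w; rewrite inE Hw orbT.
Qed.

Lemma zip_ex_snd (T : eqType) (a : T) s w :
  w \in s -> exists u, (u, w) \in zip (a :: s) s.
Proof.
elim: s a => [|b s IH] a //=; rewrite inE => /orP[/eqP->|/(IH b)[u Hu]].
  by exists a; rewrite mem_head.
by exists u; rewrite inE Hu orbT.
Qed.

Lemma zip_fun (T : eqType) (a : T) s u w w' :
  uniq (a :: s) -> (u, w) \in zip (a :: s) s -> (u, w') \in zip (a :: s) s -> w = w'.
Proof.
elim: s a => [|b s IH] a //= /andP[Ha Hu].
rewrite !inE => /orP[/eqP[E1 E2]|H1] /orP[/eqP[E3 E4]|H2]; subst => //.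
- by move: (mem_belast (zip_fst H2)) Ha => ->.
- by move: (mem_belast (zip_fst H1)) Ha => ->.
- exact: IH H1 H2.
Qed.

Lemma zip_bfun (T : eqType) (a : T) s u u' w :
  uniq (a :: s) -> (u, w) \in zip (a :: s) s -> (u', w) \in zip (a :: s) s -> u = u'.
Proof.
elim: s a => [|b s IH] a //= /andP[Ha Hu].
move: (Hu) => /andP[Hb _].
rewrite !inE => /orP[/eqP[E1 E2]|H1] /orP[/eqP[E3 E4]|H2]; subst => //.
- by move: (zip_snd H2) Hb => ->.
- by move: (zip_snd H1) Hb => ->.
- exact: IH H1 H2.
Qed.

Lemma zip_path (T : eqType) (r : rel T) (a : T) s u w :
  path r a s -> (u, w) \in zip (a :: s) s -> r u w.
Proof.
elim: s a => [|b s IH] a //= /andP[Hab Hp]; rewrite inE => /orP[/eqP[-> ->]//|].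
exact: IH.
Qed.

Lemma path_zip (T : eqType) (r : rel T) (a : T) s :
  (forall u w, (u, w) \in zip (a :: s) s -> r u w) -> path r a s.
Proof.
elim: s a => [|b s IH] a //= H; rewrite H ?mem_head //=; apply: IH => u w Hw.
by apply: H; rewrite inE Hw orbT.
Qed.

Lemma flat_same (T : eqType) (P : seq (seq T)) p q v :
  uniq (flatten P) -> p \in P -> q \in P -> v \in p -> v \in q -> p = q.
Proof.
elim: P => [|r P IH] //=; rewrite cat_uniq => /and3P[Ur Hd UP].
rewrite !inE => /orP[/eqP->|Hp] /orP[/eqP->|Hq] vp vq //.
- case/negP: Hd; apply/hasP; exists v => //; apply/flattenP; by exists q.
- case/negP: Hd; apply/hasP; exists v => //; apply/flattenP; by exists p.
- exact: IH.
Qed.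

Lemma flat_uniq (T : eqType) (P : seq (seq T)) p :
  uniq (flatten P) -> p \in P -> uniq p.
Proof.
elim: P => [|r P IH] //=; rewrite cat_uniq => /and3P[Ur Hd UP].
by rewrite inE => /orP[/eqP->|Hp] //; apply: IH.
Qed.

Lemma arc_ex (T : finType) (P : seq (seq T)) v w :
  arc P v w -> exists a s, a :: s \in P /\ (v, w) \in zip (a :: s) s.
Proof.
by case/hasP => [[|a s]] // Hp Hz; exists a, s.
Qed.

Lemma arcF (T : finType) (P : seq (seq T)) v w w' :
  uniq (flatten P) -> arc P v w -> arc P v w' -> w = w'.
Proof.
move=> U /arc_ex[a [s [Hp Hz]]] /arc_ex[a' [s' [Hp' Hz']]].
have E : a :: s = a' :: s'.
  apply: (flat_same U Hp Hp' (mem_belast (zip_fst Hz)) (mem_belast (zip_fst Hz'))).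
case: E => <- <- in Hz' Hp'; exact: zip_fun (flat_uniq U Hp) Hz Hz'.
Qed.

Lemma arcB (T : finType) (P : seq (seq T)) v v' w :
  uniq (flatten P) -> arc P v w -> arc P v' w -> v = v'.
Proof.
move=> U /arc_ex[a [s [Hp Hz]]] /arc_ex[a' [s' [Hp' Hz']]].
have E : a :: s = a' :: s'.
  by apply: (flat_same (v := w) U Hp Hp'); rewrite inE ?(zip_snd Hz) ?(zip_snd Hz') orbT.
case: E => <- <- in Hz' Hp'; exact: zip_bfun (flat_uniq U Hp) Hz Hz'.
Qed.

Lemma arc_edge (T : finType) (e : rel T) (P : seq (seq T)) v w :
  all (dpath e) P -> arc P v w -> e v w.
Proof.
move=> /allP A /arc_ex[a [s [Hp Hz]]]; move: (A _ Hp) => /= /andP[Hpa _].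
exact: zip_path Hpa Hz.
Qed.

Lemma arc_flat (T : finType) (P : seq (seq T)) v w :
  arc P v w -> v \in flatten P /\ w \in flatten P.
Proof.
move=> /arc_ex[a [s [Hp Hz]]]; split; apply/flattenP; exists (a :: s) => //.
  exact: mem_belast (zip_fst Hz).
by rewrite inE (zip_snd Hz) orbT.
Qed.

Lemma arc_in (T : finType) (P : seq (seq T)) a s v w :
  a :: s \in P -> (v, w) \in zip (a :: s) s -> arc P v w.
Proof. by move=> Hp Hz; apply/hasP; exists (a :: s). Qed.

Lemma dpath_ne (T : finType) (e : rel T) (P : seq (seq T)) p :
  all (dpath e) P -> p \in P -> exists a s, p = a :: s.
Proof. by move=> /allP A /A; case: p => // a s _; exists a, s. Qed.

Lemma heads_uniq (T : finType) (e : rel T) (P : seq (seq T)) (v0 : T) :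
  all (dpath e) P -> uniq (flatten P) -> uniq (map (head v0) P).
Proof.
elim: P => [|q P IH] //= /andP[Hq HP]; rewrite cat_uniq => /and3P[Uq Hd UP].
rewrite IH // andbT; apply/mapP => [[q' Hq' E]]; case/negP: Hd.
apply/hasP; exists (head v0 q); last by case: q Hq {E Uq} => // a s; rewrite mem_head.
apply/flattenP; exists q' => //; rewrite E.
by case/(dpath_ne HP): Hq' => a [s ->]; rewrite mem_head.
Qed.

Lemma lasts_uniq (T : finType) (e : rel T) (P : seq (seq T)) (v0 : T) :
  all (dpath e) P -> uniq (flatten P) -> uniq (map (last v0) P).
Proof.
elim: P => [|q P IH] //= /andP[Hq HP]; rewrite cat_uniq => /and3P[Uq Hd UP].
rewrite IH // andbT; apply/mapP => [[q' Hq' E]]; case/negP: Hd.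
apply/hasP; exists (last v0 q); last by case: q Hq {E Uq} => // a s; rewrite /= mem_last.
apply/flattenP; exists q' => //; rewrite E.
by case/(dpath_ne HP): Hq' => a [s ->]; rewrite /= mem_last.
Qed.

Lemma IO_dpath (T : finType) (e : rel T) I O (P : seq (seq T)) :
  all (IO_path e I O) P -> all (dpath e) P.
Proof. by move=> /allP A; apply/allP => [[|a s]] /A //= /and3P[]. Qed.

Lemma IO_size (T : finType) (e : rel T) I O (P : seq (seq T)) (v0 : T) :
  disjoint_IO_paths e I O P -> size P <= #|I|.
Proof.
move=> /andP[A U]; rewrite cardE -(size_map (head v0)).
apply: uniq_leq_size; first exact: heads_uniq (IO_dpath A) U.
move=> x /mapP[[|a s] Hp ->]; first by move: (allP A _ Hp).
by move: (allP A _ Hp) => /= /and3P[_ H _]; rewrite mem_enum.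
Qed.

Lemma IO_sizeO (T : finType) (e : rel T) I O (P : seq (seq T)) (v0 : T) :
  disjoint_IO_paths e I O P -> size P <= #|O|.
Proof.
move=> /andP[A U]; rewrite cardE -(size_map (last v0)).
apply: uniq_leq_size; first exact: lasts_uniq (IO_dpath A) U.
move=> x /mapP[[|a s] Hp ->]; first by move: (allP A _ Hp).
by move: (allP A _ Hp) => /= /and3P[_ _ H]; rewrite mem_enum.
Qed.

Lemma pc_uniq (T : finType) (e : rel T) I O (C : seq (seq T)) :
  path_cover e I O C -> uniq (flatten C).
Proof.
move=> [HdC [Hcnt _]]; apply: count_mem_uniq => x.
have Hx : x \in flatten C.
  have /hasP[p Hp Hxp] : has (fun p => x \in p) C by rewrite has_count Hcnt.
  by apply/flattenP; exists p.
rewrite Hx count_flatten; transitivity (count (fun p => x \in p) C); last by rewrite Hcnt.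
rewrite -sumn_count; congr sumn.
apply/eq_in_map => p Hp /=; rewrite count_uniq_mem //.
by case/(dpath_ne HdC): Hp (allP HdC _ Hp) => a [s ->] /= /andP[].
Qed.

Lemma pc_in (T : finType) (e : rel T) I O (C : seq (seq T)) v :
  path_cover e I O C -> exists a s, a :: s \in C /\ v \in a :: s.
Proof.
move=> [HdC [Hcnt _]].
have /hasP[p Hp Hvp] : has (fun p => v \in p) C by rewrite has_count Hcnt. case/(dpath_ne HdC): (Hp) => a [s E]; subst p.
by exists a, s.
Qed.

Lemma pc_notI (T : finType) (e : rel T) I O (C : seq (seq T)) u w :
  path_cover e I O C -> arc C u w -> w \notin I.
Proof.
move=> [_ [_ Hend]] /arc_ex[a [s [Hp Hz]]].
by case: (Hend _ Hp a s erefl) => H _; apply: H; exact: zip_snd Hz.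
Qed.

Lemma pc_headI (T : finType) (e : rel T) I O (C : seq (seq T)) a s v :
  path_cover e I O C -> a :: s \in C -> v \in a :: s -> v \in I -> v = a.
Proof.
move=> [_ [_ Hend]] Hp; rewrite inE => /orP[/eqP//|Hv] HI.
by case: (Hend _ Hp a s erefl) => H _; move: (H _ Hv); rewrite HI.
Qed.

Lemma pc_succ (T : finType) (e : rel T) I O (C : seq (seq T)) v :
  path_cover e I O C -> v \notin O -> exists w, arc C v w.
Proof.
move=> PC HvO; case: (pc_in v PC) => a [s [Hp Hv]].
move: Hv; rewrite lastI mem_rcons inE => /orP[/eqP E|Hb].
  case: PC => _ [_ Hend]; case: (Hend _ Hp a s erefl) => _ [H _].
  by move: HvO; rewrite E H.
case: (zip_ex_fst Hb) => w Hw; exists w; exact: arc_in Hp Hw.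
Qed.

Lemma pc_IO (T : finType) (e : rel T) (I O : {set T}) (C : seq (seq T)) (v0 : T) :
  #|I| = #|O| -> path_cover e I O C ->
  disjoint_IO_paths e I O C /\ size C = #|I|.
Proof.
move=> HIO PC; have U := pc_uniq PC.
case: (PC) => HdC [Hcnt Hend].
have HL : size C <= #|O|.
  rewrite cardE -(size_map (last v0)); apply: uniq_leq_size.
    exact: lasts_uniq HdC U.
  move=> x /mapP[p Hp ->]; case/(dpath_ne HdC): (Hp) => a [s E]; subst p.
  by case: (Hend _ Hp a s erefl) => _ [H _]; rewrite mem_enum.
have Hsub : {subset enum I <= map (head v0) C}.
  move=> x; rewrite mem_enum => HxI; case: (pc_in x PC) => a [s [Hp Hx]].
  rewrite (pc_headI PC Hp Hx HxI); apply/mapP; by exists (a :: s).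
have Hle : size (map (head v0) C) <= size (enum I) by rewrite size_map -cardE HIO.
have [Hsz Heq] := uniq_min_size (enum_uniq (mem I)) Hsub Hle.
rewrite size_map -cardE in Hsz.
split => //; apply/andP; split => //; apply/allP => p Hp.
case/(dpath_ne HdC): (Hp) => a [s E]; subst p.
rewrite /IO_path (allP HdC _ Hp) /=.
case: (Hend _ Hp a s erefl) => _ [-> _]; rewrite andbT.
by rewrite -mem_enum Heq; apply/mapP; exists (a :: s).
Qed.

Lemma chain_eq (T : eqType) (g : T -> T) (Q : pred T) a s s' :
  path (fun u w => w == g u) a s -> path (fun u w => w == g u) a s' ->
  (forall v, v \in belast a s -> ~~ Q v) -> Q (last a s) ->
  (forall v, v \in belast a s' -> ~~ Q v) -> Q (last a s') -> s = s'.
Proof.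
elim: s a s' => [|b s IH] a [|b' s'] //=.
- move=> _ _ _ Ha H _; by move: (H a (mem_head _ _)); rewrite Ha.
- move=> _ _ H _ _ Ha; by move: (H a (mem_head _ _)); rewrite Ha.
move=> /andP[/eqP E1 P1] /andP[/eqP E2 P2] H1 L1 H2 L2; subst b b'.
congr cons; apply: (IH (g a)) => // v Hv.
  by apply: H1; rewrite inE Hv orbT.
by apply: H2; rewrite inE Hv orbT.
Qed.

Definition conn1 (T : finType) (e : rel T) (C : seq (seq T)) x y :=
  exists s, s != [::] /\ path (inf_seg e C) x s /\ last x s = y.

Lemma conn1_trans (T : finType) (e : rel T) C x y z :
  conn1 e C x y -> conn1 e C y z -> conn1 e C x z.
Proof.
move=> [s [Hs [P1 L1]]] [t [Ht [P2 L2]]]; exists (s ++ t); split.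
  by case: s Hs {P1 L1}.
by rewrite cat_path last_cat L1 P1.
Qed.

Lemma rstep (T : finType) (e : rel T) I O (C : seq (seq T)) x z y :
  symmetric e -> path_cover e I O C ->
  arc C x z -> (y = z \/ (e z y /\ y != x)) -> conn1 e C x y.
Proof.
move=> es PC Hxz [->|[Ezy Hyx]].
  by exists [:: z]; rewrite /= /inf_seg Hxz.
have U := pc_uniq PC.
case Hcov: (covered C z y).
  case/orP: Hcov => Hc.
    exists [:: z; y]; rewrite /= /inf_seg Hxz Hc; split => //.
  by move: Hyx; rewrite (arcB U Hc Hxz) eqxx.
exists [:: y]; split => //; split => //=; rewrite andbT /inf_seg.
apply/orP; right; apply/existsP; exists z; by rewrite Hxz Ezy Hcov.
Qed.

Lemma core (T : finType) (e : rel T) (I O : {set T}) (C D : seq (seq T)) (v0 : T) :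
  symmetric e -> irreflexive e ->
  path_cover e I O C -> ~ has_vicious_circuit e C ->
  disjoint_IO_paths e I O D -> {subset O <= map (last v0) D} ->
  {subset D <= C}.
Proof.
move=> es ei PC NV DI HO.
have UC := pc_uniq PC.
case/andP: (DI) => AD UD; have ADd := IO_dpath AD.
pose cs x := odflt x [pick y | arc C x y].
have csP x : x \notin O -> arc C x (cs x).
  move=> /(pc_succ PC)[w Hw]; rewrite /cs; case: pickP => [y //|/(_ w)].
  by rewrite Hw.
have csF x y : arc C x y -> y = cs x.
  move=> Hxy; rewrite /cs; case: pickP => [y' Hy' /=|/(_ y)]; last by rewrite Hxy.
  exact: arcF UC Hxy Hy'.
pose dp y := odflt y [pick u | arc D u y].
have dpP y : y \in flatten D -> y \notin I -> arc D (dp y) y.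
  case/flattenP => p Hp Hyp HyI.
  case/(dpath_ne ADd): (Hp) => a [s E]; subst p.
  have Ha : a \in I by move: (allP AD _ Hp) => /and3P[].
  move: Hyp; rewrite inE => /orP[/eqP E|Hys]; first by move: HyI; rewrite E Ha.
  case: (zip_ex_snd a Hys) => u Hu.
  rewrite /dp; case: pickP => [u' //|/(_ u)]; by rewrite (arc_in Hp Hu).
have D2 u y : arc D u y -> u \notin O.
  move=> Huy; apply/negP => /HO /mapP[p' Hp' Eu].
  case/(dpath_ne ADd): (Hp') => a' [s' E']; subst p'.
  case/arc_ex: Huy => a [s [Hp Hz]].
  have Hb := zip_fst Hz.
  have E : a :: s = a' :: s'.
    apply: (flat_same (v := u) UD Hp Hp'); first exact: mem_belast Hb.
    by rewrite Eu /= mem_last.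
  case: E => ? ?; subst a' s'.
  have := flat_uniq UD Hp; rewrite lastI rcons_uniq => /andP[/negP Hn _]; apply: Hn.
  by rewrite -[last a s]/(last v0 (a :: s)) -Eu.
have HOD : {subset O <= flatten D}.
  move=> x /HO /mapP[p Hp ->]; case/(dpath_ne ADd): (Hp) => a [s E]; subst p.
  by apply/flattenP; exists (a :: s) => //; exact: (mem_last a s).
pose F x := if x \in O then x else if cs x \in flatten D then dp (cs x) else cs x.
have Fnot x : x \notin O -> F x \notin O.
  move=> Hx; rewrite /F (negPf Hx); case: ifP => H.
    apply: (D2 _ (cs x)); apply: dpP => //; exact: pc_notI PC (csP x Hx).
  by apply/negP => /HOD; rewrite H.
have Finj : injective F.
  move=> x x'.
  have key y y' : y \in O -> y' \notin O -> F y = F y' -> y = y'.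
    move=> Hy Hy' E; move: (Fnot _ Hy'); rewrite -E /F Hy => /negP; by [].
  case Hx: (x \in O); case Hx': (x' \in O).
  - by rewrite /F Hx Hx'.
  - by apply: key => //; rewrite Hx'.
  - by move=> E; apply/esym/key => //; rewrite ?Hx.
  have nx : x \notin O by rewrite Hx.
  have nx' : x' \notin O by rewrite Hx'.
  have inj_cs : cs x = cs x' -> x = x'.
    move=> E; apply: (arcB UC (csP x nx)); rewrite E; exact: csP.
  rewrite /F Hx Hx'.
  have dpA z : z \in O = false -> cs z \in flatten D -> arc D (dp (cs z)) (cs z).
    move=> Hz Hin; apply: dpP => //; apply: (pc_notI PC (u := z)); apply: csP.
    by rewrite Hz.
  case H1: (cs x \in flatten D); case H2: (cs x' \in flatten D) => E.
  - apply: inj_cs; apply: (arcF UD (dpA x Hx H1)); rewrite E; exact: dpA.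
  - by move: H2; rewrite -E; case/arc_flat: (dpA x Hx H1) => ->.
  - by move: H1; rewrite E; case/arc_flat: (dpA x' Hx' H2) => ->.
  - exact: inj_cs.
have step x : F x != x -> conn1 e C x (F x).
  rewrite /F; case: ifP => Hx; first by rewrite eqxx.
  have nx : x \notin O by rewrite Hx.
  move=> Hne; apply: (rstep (z := cs x) es PC (csP x nx)).
  case: ifP Hne => H Hne; last by left.
  right; split => //.
  rewrite es; apply: (arc_edge ADd); apply: dpP => //.
  exact: pc_notI PC (csP x nx).
have Fid x : F x = x.
  apply/eqP; apply/negPn/negP => Hne; apply: NV.
  have Hk k : conn1 e C x (iter k.+1 F x).
    elim: k => [|k IH]; first exact: step.
    rewrite iterS; case: (eqVneq (F (iter k.+1 F x)) (iter k.+1 F x)) => [->//|H].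
    exact: conn1_trans IH (step _ H).
  have := Hk (order F x).-1; rewrite prednK ?order_gt0 // iter_order //.
  by case=> s [Hs [Hp Hl]]; exists x, s; split => //; apply/eqP.
have Dcs u w : arc D u w -> w = cs u.
  move=> Huw; have nu := D2 _ _ Huw.
  have Hin : cs u \in flatten D.
    apply/negPn/negP => Hn; have := Fid u; rewrite /F (negPf nu) (negPf Hn) => E.
    by move: (arc_edge (proj1 PC) (csP u nu)); rewrite E ei.
  have := Fid u; rewrite /F (negPf nu) Hin => E.
  have := dpP _ Hin (pc_notI PC (csP u nu)); rewrite E => H.
  exact: arcF UD Huw H.
move=> p Hp; case/(dpath_ne ADd): (Hp) => a [s E]; subst p.
have /and3P[_ HaI HaO] := allP AD _ Hp.
case: (pc_in a PC) => a' [s' [Hq Haq]].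
have E := pc_headI PC Hq Haq HaI; subst a'.
case: (PC) => HdC [_ Hend]; case: (Hend _ Hq a s' erefl) => _ [HlC HbC].
suff -> : s = s' by [].
apply: (chain_eq (g := cs) (Q := mem O) (a := a)) => //.
- apply: path_zip => u w Hz; apply/eqP; exact: Dcs (arc_in Hp Hz).
- apply: path_zip => u w Hz; apply/eqP; exact: csF (arc_in Hq Hz).
- move=> v Hv; case: (zip_ex_fst Hv) => w Hw; exact: D2 (arc_in Hp Hw).
Qed.

Lemma empty_nil (T : finType) (e : rel T) (P : seq (seq T)) :
  (@predT T) =1 xpred0 -> all (dpath e) P -> P = [::].
Proof.
move=> T0; case: P => // p P /= /andP[Hp _]; case: p Hp => // a.
by move: (T0 a).
Qed.

Theorem mainTheorem11 (T : finType) (e : rel T)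
    (e_sym : symmetric e) (e_irr : irreflexive e)
    (I O : {set T}) (C : seq (seq T)) :
  #|I| = #|O| ->
  causal_path_cover e I O C ->
  (disjoint_IO_paths e I O C /\
   (forall D, disjoint_IO_paths e I O D -> size D <= size C)) /\
  (forall D, disjoint_IO_paths e I O D ->
     (forall D', disjoint_IO_paths e I O D' -> size D' <= size D) ->
     perm_eq D C).
Proof.
move=> HIO [PC NV].
case: (pickP (@predT T)) => [v0 _|T0]; last first.
  have EC : C = [::] := empty_nil T0 (proj1 PC).
  subst C; split; first split => // D /andP[A _].
    by rewrite (empty_nil T0 (IO_dpath A)).
  by move=> D /andP[A _] _; rewrite (empty_nil T0 (IO_dpath A)).
have [DC SC] := pc_IO v0 HIO PC.
split; first by split => // D HD; rewrite SC; exact: IO_size v0 HD.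
move=> D DI Hmax.
have HCD := Hmax _ DC.
have HDI := IO_size v0 DI.
case/andP: (DI) => AD UD; have ADd := IO_dpath AD.
case/andP: (DC) => AC UC; have ACd := IO_dpath AC.
have HO : {subset O <= map (last v0) D}.
  have Hsub : {subset map (last v0) D <= enum O}.
    move=> x /mapP[[|a s] Hp ->]; first by move: (allP AD _ Hp).
    by move: (allP AD _ Hp) => /= /and3P[_ _ H]; rewrite mem_enum.
  have Hle : size (enum O) <= size (map (last v0) D).
    by rewrite size_map -cardE -HIO -SC.
  have [_ Heq] := uniq_min_size (lasts_uniq v0 ADd UD) Hsub Hle.
  by move=> x Hx; rewrite Heq mem_enum.
have Hsub := core e_sym e_irr PC NV DI HO.
have UDs : uniq D := map_uniq (heads_uniq v0 ADd UD).
have UCs : uniq C := map_uniq (heads_uniq v0 ACd UC).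
have [_ Heq] := uniq_min_size UDs Hsub HCD.
exact: uniq_perm.
Qed.
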